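(* Let $(V,\|\cdot\|)$ be a normed plane with unit circle $S$ and let $x,y\in V$ be nonzero with $x\dashv_B y$. Then $\|T_{xy}(z)\|\le 3$ for every $z\in S$. Moreover, if $\|T_{xy}(z)\|=3$ for some $z\in S$, then the plane is rectilinear (its unit circle is a parallelogram).
   Context: A normed (Minkowski) plane $(V,\|\cdot\|)$ is a two-dimensional real vector space with a norm; $S=\{v:\|v\|=1\}$ is its unit circle. For nonzero $x,y$, $x$ is Birkhoff orthogonal to $y$, written $x\dashv_B y$, if $\|x+ty\|\ge\|x\|$ for all $t\in\mathbb{R}$ (this forces $x,y$ to be linearly independent). For linearly independent $x,y\in V$, $T_{xy}:V\to V$ is the linear map with $T_{xy}(x)=x$ and $T_{xy}(y)=-y$. A normed plane is rectilinear if its unit circle is a parallelogram. *)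

(* Defs.v *)
From Stdlib Require Import Reals Lra.
Open Scope R_scope.

(* A two-dimensional real vector space is modelled as R^2 = R * R;
   every 2-dimensional real normed space is linearly isometric to
   (R^2, N) for some norm N, so this is no loss of generality. *)
Definition V : Type := (R * R)%type.

Definition vzero : V := (0, 0).
Definition vadd (u v : V) : V := (fst u + fst v, snd u + snd v).
Definition vscale (a : R) (u : V) : V := (a * fst u, a * snd u).
Definition vopp (u : V) : V := vscale (-1) u.

Definition is_norm (N : V -> R) : Prop :=
  (forall v, 0 <= N v) /\
  (forall v, N v = 0 -> v = vzero) /\
  (forall a v, N (vscale a v) = Rabs a * N v) /\
  (forall u v, N (vadd u v) <= N u + N v).

Definition unit_circle (N : V -> R) (v : V) : Prop := N v = 1.

Definition birkhoff (N : V -> R) (x y : V) : Prop :=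
  forall t : R, N x <= N (vadd x (vscale t y)).

Definition is_linear (T : V -> V) : Prop :=
  (forall u v, T (vadd u v) = vadd (T u) (T v)) /\
  (forall a u, T (vscale a u) = vscale a (T u)).

Definition lin_indep (u v : V) : Prop :=
  forall a b : R, vadd (vscale a u) (vscale b v) = vzero -> a = 0 /\ b = 0.

Definition parallelogram_boundary (p b c : V) (v : V) : Prop :=
  exists s t : R, 0 <= s <= 1 /\ 0 <= t <= 1 /\
    (s = 0 \/ s = 1 \/ t = 0 \/ t = 1) /\
    v = vadd p (vadd (vscale s b) (vscale t c)).

Definition rectilinear (N : V -> R) : Prop :=
  exists p b c : V, lin_indep b c /\
    forall v, unit_circle N v <-> parallelogram_boundary p b c v.

(* Main.v *)
Require Import Defs.
From Stdlib Require Import Reals.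
From Stdlib Require Import Lra.
Open Scope R_scope.

Definition LC (x y : V) (k r : R) : V := vadd (vscale k x) (vscale r y).

Lemma n_scale N (HN : is_norm N) a v : N (vscale a v) = Rabs a * N v.
Proof. destruct HN as [_ [_ [H _]]]. apply H. Qed.

Lemma n_tri N (HN : is_norm N) u v : N (vadd u v) <= N u + N v.
Proof. destruct HN as [_ [_ [_ H]]]. apply H. Qed.

Lemma n_pos N (HN : is_norm N) v : 0 <= N v.
Proof. destruct HN as [H _]. apply H. Qed.

Lemma n_zero N (HN : is_norm N) v : N v = 0 -> v = vzero.
Proof. destruct HN as [_ [H _]]. apply H. Qed.

Lemma n_vzero N (HN : is_norm N) : N vzero = 0.
Proof.
  replace vzero with (vscale 0 vzero).
  - rewrite (n_scale N HN). rewrite Rabs_R0. ring.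
  - unfold vscale, vzero; simpl; f_equal; ring.
Qed.

Lemma comb N (HN : is_norm N) x y k r c1 k1 r1 c2 k2 r2 :
  k = c1*k1+c2*k2 -> r = c1*r1+c2*r2 ->
  N (LC x y k r) <= Rabs c1 * N (LC x y k1 r1) + Rabs c2 * N (LC x y k2 r2).
Proof.
  intros -> ->.
  replace (LC x y (c1 * k1 + c2 * k2) (c1 * r1 + c2 * r2))
    with (vadd (vscale c1 (LC x y k1 r1)) (vscale c2 (LC x y k2 r2))).
  - rewrite <- !(n_scale N HN). apply (n_tri N HN).
  - destruct x as [x1 x2]; destruct y as [y1 y2];
    unfold LC, vadd, vscale; simpl; f_equal; ring.
Qed.

Lemma LC_eq x y k r k' r' : k = k' -> r = r' -> LC x y k r = LC x y k' r'.
Proof. intros -> ->; reflexivity. Qed.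

Lemma LC_zero x y k r :
  fst x * snd y - snd x * fst y <> 0 -> LC x y k r = vzero -> k = 0 /\ r = 0.
Proof.
  destruct x as [x1 x2]; destruct y as [y1 y2]; unfold LC, vadd, vscale, vzero; simpl.
  intros Hd H. injection H as H1 H2.
  assert (E1 : k * (x1*y2 - x2*y1) = y2*(k*x1+r*y1) - y1*(k*x2+r*y2)) by ring.
  assert (E2 : r * (x1*y2 - x2*y1) = x1*(k*x2+r*y2) - x2*(k*x1+r*y1)) by ring.
  rewrite H1, H2 in E1, E2.
  split.
  - assert (k * (x1*y2-x2*y1) = 0) by lra.
    destruct (Rmult_integral _ _ H); [auto| contradiction].
  - assert (r * (x1*y2-x2*y1) = 0) by lra.
    destruct (Rmult_integral _ _ H); [auto| contradiction].
Qed.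

Lemma decomp x y z : fst x * snd y - snd x * fst y <> 0 ->
  z = LC x y ((fst z * snd y - snd z * fst y)/(fst x * snd y - snd x * fst y))
             ((fst x * snd z - snd x * fst z)/(fst x * snd y - snd x * fst y)).
Proof.
  destruct x as [x1 x2]; destruct y as [y1 y2]; destruct z as [z1 z2];
  unfold LC, vadd, vscale; simpl. intros Hd. f_equal; field; auto.
Qed.

Lemma det_nz N (HN : is_norm N) x y : x <> vzero -> y <> vzero -> birkhoff N x y ->
  fst x * snd y - snd x * fst y <> 0.
Proof.
  intros hx hy hB Hd.
  assert (Hx : 0 < N x).
  { destruct (Rle_lt_or_eq_dec 0 (N x) (n_pos N HN x)); auto.
    exfalso; apply hx; apply (n_zero N HN); auto. }
  destruct x as [x1 x2]; destruct y as [y1 y2]; simpl in Hd.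
  assert (exists t, vadd (x1,x2) (vscale t (y1,y2)) = vzero) as [t Ht].
  { destruct (Req_dec y1 0) as [Hy1|Hy1].
    - destruct (Req_dec y2 0) as [Hy2|Hy2].
      + exfalso; apply hy; unfold vzero; subst; auto.
      + exists (- x2 / y2). unfold vadd, vscale, vzero; simpl. subst.
        f_equal; field_simplify; auto.
        assert (x1 * y2 = 0) by lra.
        destruct (Rmult_integral _ _ H); [subst; field; auto | contradiction].
    - exists (- x1 / y1). unfold vadd, vscale, vzero; simpl.
      f_equal; [field; auto|].
      apply (Rmult_eq_reg_r y1); [|auto]. field_simplify; auto. lra. }
  specialize (hB t). rewrite Ht, (n_vzero N HN) in hB. lra.
Qed.

Lemma bscaled N (HN : is_norm N) x y (hB : birkhoff N x y) k r :
  Rabs k * N x <= N (LC x y k r).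
Proof.
  destruct (Req_dec k 0) as [Hk|Hk].
  - subst. rewrite Rabs_R0. rewrite Rmult_0_l. apply (n_pos N HN).
  - replace (LC x y k r) with (vscale k (vadd x (vscale (r/k) y))).
    + rewrite (n_scale N HN). apply Rmult_le_compat_l; [apply Rabs_pos|]. apply hB.
    + destruct x; destruct y; unfold LC, vadd, vscale; simpl; f_equal; field; auto.
Qed.

Theorem lemma5p1 (N : V -> R) (HN : is_norm N) (x y : V)
  (hx : x <> vzero) (hy : y <> vzero) (hB : birkhoff N x y)
  (T : V -> V) (hT : is_linear T) (hTx : T x = x) (hTy : T y = vopp y) :
  (forall z, unit_circle N z -> N (T z) <= 3) /\
  ((exists z, unit_circle N z /\ N (T z) = 3) -> rectilinear N).
Proof.
  pose proof (det_nz N HN x y hx hy hB) as Hd.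
  set (d := fst x * snd y - snd x * fst y) in *.
  assert (HT : forall a b, T (LC x y a b) = LC x y a (-b)).
  { intros a b. unfold LC. destruct hT as [HA HS].
    rewrite HA, !HS, hTx, hTy. unfold vopp.
    destruct y; unfold vadd, vscale; simpl; f_equal; f_equal; ring. }
  assert (Main : forall a b, N (LC x y a b) = 1 ->
    Rabs a * N x <= 1 /\ N (LC x y a (-b)) <= 2 * (Rabs a * N x) + 1).
  { intros a b H. split.
    - rewrite <- H. apply (bscaled N HN x y hB).
    - pose proof (comb N HN x y a (-b) 2 a 0 (-1) a b) as C.
      rewrite H in C. replace (Rabs 2) with 2 in C by (rewrite Rabs_pos_eq; lra).
      replace (Rabs (-1)) with 1 in C by (rewrite Rabs_left by lra; ring).
      assert (N (LC x y a 0) = Rabs a * N x).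
      { unfold LC. replace (vadd (vscale a x) (vscale 0 y)) with (vscale a x).
        - apply (n_scale N HN).
        - destruct x; destruct y; unfold vadd, vscale; simpl; f_equal; ring. }
      rewrite H0 in C. assert (h := C ltac:(ring) ltac:(ring)). lra. }
  split.
  - intros z Hz. unfold unit_circle in Hz.
    rewrite (decomp x y z Hd) in Hz |- *. rewrite HT.
    destruct (Main _ _ Hz). lra.
  - intros [z [Hz H3]]. unfold unit_circle in Hz.
    assert (Ez : exists al be, z = LC x y al be) by (eexists; eexists; apply (decomp x y z Hd)).
    destruct Ez as [al [be Ez]]. subst z. rewrite HT in H3.
    destruct (Main _ _ Hz) as [M1 M2].
    assert (Ha : Rabs al * N x = 1) by lra.
    assert (Hal : al <> 0).
    { intro E; rewrite E, Rabs_R0 in Ha; lra. }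
    assert (Hbe : be <> 0).
    { intro E. rewrite E, Ropp_0 in H3. rewrite E in Hz. lra. }
    assert (NA : N (LC x y al 0) = 1).
    { rewrite <- Ha. unfold LC.
      replace (vadd (vscale al x) (vscale 0 y)) with (vscale al x).
      - apply (n_scale N HN).
      - destruct x; destruct y; unfold vadd, vscale; simpl; f_equal; ring. }
    assert (Kii : forall p q, 0 <= p -> 0 <= q ->
               p + q <= N (LC x y ((p - q)*al) (-q*be))).
    { intros p q Hp Hq. destruct (Rle_dec p (2*q)) as [Hpq|Hpq].
      - pose proof (comb N HN x y (q*al) (-q*be) 1 ((p-q)*al) (-q*be)
                      (2*q-p) al 0) as C.
        rewrite NA, Rabs_R1 in C.
        rewrite (Rabs_pos_eq (2*q-p)) in C by lra.
        replace (LC x y (q*al) (-q*be)) with (vscale q (LC x y al (-be))) in C.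
        + rewrite (n_scale N HN), H3, Rabs_pos_eq in C by lra.
          assert (h := C ltac:(ring) ltac:(ring)). lra.
        + destruct x; destruct y; unfold LC, vadd, vscale; simpl; f_equal; ring.
      - pose proof (comb N HN x y (p*al) (-p*be) 2 ((p-q)*al) (-q*be)
                      (2*q-p) al be) as C.
        rewrite Hz in C.
        rewrite (Rabs_left (2*q-p)), (Rabs_pos_eq 2) in C by lra.
        replace (LC x y (p*al) (-p*be)) with (vscale p (LC x y al (-be))) in C.
        + rewrite (n_scale N HN), H3, Rabs_pos_eq in C by lra.
          assert (h := C ltac:(ring) ltac:(ring)). lra.
        + destruct x; destruct y; unfold LC, vadd, vscale; simpl; f_equal; ring. }
    assert (K : forall s t, N (LC x y ((s+t)*al) (t*be)) = Rabs s + Rabs t).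
    { intros s t. apply Rle_antisym.
      - pose proof (comb N HN x y ((s+t)*al) (t*be) s al 0 t al be) as C.
        rewrite NA, Hz in C. assert (h := C ltac:(ring) ltac:(ring)). lra.
      - pose proof (bscaled N HN x y hB ((s+t)*al) (t*be)) as B.
        rewrite Rabs_mult, Rmult_assoc, Ha in B.
        destruct (Rle_dec 0 s); destruct (Rle_dec 0 t).
        + rewrite (Rabs_pos_eq s), (Rabs_pos_eq t), (Rabs_pos_eq (s+t)) in * by lra. lra.
        + rewrite (Rabs_pos_eq s), (Rabs_left t) by lra.
          pose proof (Kii s (-t) r ltac:(lra)) as KK.
          replace ((s - - t) * al) with ((s+t)*al) in KK by ring.
          replace (- - t * be) with (t*be) in KK by ring. lra.
        + rewrite (Rabs_left s), (Rabs_pos_eq t) by lra.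
          pose proof (Kii (-s) t ltac:(lra) r) as KK.
          pose proof (comb N HN x y ((-s-t)*al) (-t*be) (-1) ((s+t)*al) (t*be) 0 0 0) as C.
          rewrite (Rabs_left (-1)), Rabs_R0 in C by lra.
          assert (h := C ltac:(ring) ltac:(ring)).
          replace ((- s - t) * al) with ((-s - t)*al) in KK by ring. lra.
        + rewrite (Rabs_left s), (Rabs_left t), (Rabs_left (s+t)) in * by lra. lra. }
    exists (LC x y (-al) (-be)), (LC x y (2*al) be), (LC x y 0 be). split.
    + intros c1 c2 E.
      assert (E' : LC x y (c1*(2*al) + c2*0) (c1*be + c2*be) = vzero).
      { rewrite <- E. destruct x; destruct y; unfold LC, vadd, vscale; simpl; f_equal; ring. }
      destruct (LC_zero x y _ _ Hd E') as [Z1 Z2].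
      assert (c1 = 0).
      { assert (c1 * (2*al) = 0) by lra. destruct (Rmult_integral _ _ H); [auto|].
        exfalso; lra. }
      subst. split; auto.
      assert (c2 * be = 0) by lra. destruct (Rmult_integral _ _ H); [auto|contradiction].
    + intro v. unfold unit_circle, parallelogram_boundary. split.
      * intro Hv.
        assert (Ev0 : exists k r, v = LC x y k r) by (eexists; eexists; apply (decomp x y v Hd)).
        destruct Ev0 as [k [r Ev0]]. subst v.
        set (tau := r / be). set (sig := k/al - r/be).
        assert (Ev : LC x y k r = LC x y ((sig+tau)*al) (tau*be)).
        { apply LC_eq; unfold sig, tau; field; auto. }
        rewrite Ev in Hv |- *. rewrite K in Hv.
        exists ((sig+tau+1)/2), ((tau-sig+1)/2).
        split; [|split; [|split]].
        -- destruct (Rle_dec 0 sig); destruct (Rle_dec 0 tau);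
           [rewrite (Rabs_pos_eq sig), (Rabs_pos_eq tau) in Hv by lra
           |rewrite (Rabs_pos_eq sig), (Rabs_left tau) in Hv by lra
           |rewrite (Rabs_left sig), (Rabs_pos_eq tau) in Hv by lra
           |rewrite (Rabs_left sig), (Rabs_left tau) in Hv by lra]; lra.
        -- destruct (Rle_dec 0 sig); destruct (Rle_dec 0 tau);
           [rewrite (Rabs_pos_eq sig), (Rabs_pos_eq tau) in Hv by lra
           |rewrite (Rabs_pos_eq sig), (Rabs_left tau) in Hv by lra
           |rewrite (Rabs_left sig), (Rabs_pos_eq tau) in Hv by lra
           |rewrite (Rabs_left sig), (Rabs_left tau) in Hv by lra]; lra.
        -- destruct (Rle_dec 0 sig); destruct (Rle_dec 0 tau);
           [rewrite (Rabs_pos_eq sig), (Rabs_pos_eq tau) in Hv by lra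
           |rewrite (Rabs_pos_eq sig), (Rabs_left tau) in Hv by lra
           |rewrite (Rabs_left sig), (Rabs_pos_eq tau) in Hv by lra
           |rewrite (Rabs_left sig), (Rabs_left tau) in Hv by lra].
           ++ right; left; lra.
           ++ right; right; left; lra.
           ++ right; right; right; lra.
           ++ left; lra.
        -- destruct x; destruct y; unfold LC, vadd, vscale; simpl; f_equal; field.
      * intros [s [t [Hs [Ht [Hb Hv]]]]]. subst v.
        replace (vadd (LC x y (- al) (- be))
                   (vadd (vscale s (LC x y (2 * al) be)) (vscale t (LC x y 0 be))))
          with (LC x y (((s-t)+(s+t-1))*al) ((s+t-1)*be)).
        -- rewrite K.
           destruct (Rle_dec 0 (s-t)); destruct (Rle_dec 0 (s+t-1));
           [rewrite (Rabs_pos_eq (s-t)), (Rabs_pos_eq (s+t-1)) by lra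
           |rewrite (Rabs_pos_eq (s-t)), (Rabs_left (s+t-1)) by lra
           |rewrite (Rabs_left (s-t)), (Rabs_pos_eq (s+t-1)) by lra
           |rewrite (Rabs_left (s-t)), (Rabs_left (s+t-1)) by lra]; lra.
        -- destruct x; destruct y; unfold LC, vadd, vscale; simpl; f_equal; ring.
Qed.
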